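(* Let $E/\mathbb{F}_q$, $r\ge2$, $\mathcal{G}$, $F=E^{\mathcal{G}}$, the places $Q_0,\dots,Q_s$, $P_{u,v}$, and the functions $z,\omega_0,\dots,\omega_{r-1}$ be as in the context, and let $1\le t\le s$. For $\mathbf a=(a_{i,j})$ let $$f_{\mathbf a}=\sum_{j=1}^{t}a_{0,j}z^{j-1}+\sum_{i=1}^{r-1}\Big(\sum_{j=1}^{t-1}a_{i,j}z^{j-1}\Big)\omega_i\in V_E .$$ Fix $u\in\{1,\dots,s\}$ and suppose that every $r\times r$ submatrix of $M_u$ is invertible and every $(r-1)\times(r-1)$ submatrix of the $(r+1)\times(r-1)$ matrix $M'_u=(\omega_i(P_{u,v}))_{1\le v\le r+1,\,1\le i\le r-1}$ is invertible. For $f_{\mathbf a}\in V_E$ consider the vector $$B_u(\mathbf a)=\Big(f_{\mathbf a}(P_{u,1}),\dots,f_{\mathbf a}(P_{u,r+1}),\ \sum_{j=1}^ta_{0,j}z(Q_u)^{j-1}\Big)\in\mathbb{F}_q^{r+2}.$$ Then for any two positions of $B_u(\mathbf a)$, the entries in these two positions are uniquely determined by the remaining $r$ entries; that is, if $B_u(\mathbf a)$ and $B_u(\mathbf b)$ agree in $r$ positions, they agree everywhere.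
   Context: $E/\mathbb{F}_q$ is an elliptic function field with full constant field $\mathbb{F}_q$; $\mathcal{G}\subseteq\mathrm{Aut}(E/\mathbb{F}_q)$ is a subgroup of order $r+1$ with fixed field $F=E^{\mathcal{G}}$ a rational function field; $Q_0,Q_1,\dots,Q_s$ are distinct rational places of $F$ splitting completely in $E/F$, and $P_{u,1},\dots,P_{u,r+1}$ are the places of $E$ over $Q_u$. $z\in F$ satisfies $F=\mathbb{F}_q(z)$ and $(z)_\infty=P_{0,1}+\cdots+P_{0,r+1}$ in $E$; $\omega_0=1$ and $\omega_1,\dots,\omega_{r-1}\in E$ satisfy $(\omega_i)_\infty=P_{0,1}+\cdots+P_{0,i+1}$ and $\omega_0,\dots,\omega_{r-1}$ are linearly independent over $F$. $M_u$ is the $(r+1)\times r$ matrix $(\omega_i(P_{u,v}))_{1\le v\le r+1,\,0\le i\le r-1}$. $V_E$ is the $\mathbb{F}_q$-space of all $f_{\mathbf a}$ as displayed, of dimension $rt-r+1$. *)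

(* Defs.v *)
(* Abstract model of an algebraic function field E over a
   finite field K = F_q: places are normalized discrete valuations of E
   trivial on K; rational places additionally carry their residue map. *)
From HB Require Import structures.
From mathcomp Require Import all_boot all_order all_algebra.
Set Implicit Arguments. Unset Strict Implicit. Unset Printing Implicit Defensive.
Import Order.TTheory GRing.Theory Num.Theory.
Local Open Scope ring_scope.

Section FunctionFieldDefs.
Variables (K : finFieldType) (E : fieldType) (cst : {rmorphism K -> E}).

Definition allE : E -> Prop := fun _ => True.

(* x is regular (in the valuation ring) for ord; ord 0 is irrelevant *)
Definition regular (ord : E -> int) (x : E) : Prop := x = 0 \/ 0 <= ord x.

Definition is_place_on (S : E -> Prop) (ord : E -> int) : Prop :=
  [/\ (forall x y, S x -> S y -> x != 0 -> y != 0 -> ord (x * y) = ord x + ord y),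
      (forall x y, S x -> S y -> x != 0 -> y != 0 -> x + y != 0 ->
         Num.min (ord x) (ord y) <= ord (x + y)),
      (forall c, c != 0 -> ord (cst c) = 0) &
      (exists w, [/\ S w, w != 0 & ord w = 1])].

Definition is_rat_place_on (S : E -> Prop) (ord : E -> int) (ev : E -> K) : Prop :=
  [/\ is_place_on S ord,
      (forall c, ev (cst c) = c),
      (forall x y, S x -> S y -> regular ord x -> regular ord y ->
         ev (x + y) = ev x + ev y /\ ev (x * y) = ev x * ev y) &
      (forall x, S x -> regular ord x -> (ev x = 0 <-> (x = 0 \/ 0 < ord x)))].

Definition same_place_on (S : E -> Prop) (o1 o2 : E -> int) : Prop :=
  forall x, S x -> x != 0 -> o1 x = o2 x.

Definition lies_over (S : E -> Prop) (oP oQ : E -> int) : Prop :=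
  forall x, S x -> x != 0 -> (0 <= oP x <-> 0 <= oQ x).

Definition full_constant_field : Prop :=
  forall x : E, (exists p : {poly K}, p != 0 /\ root (map_poly cst p) x) ->
    exists c, x = cst c.

Definition Lspace (oP : E -> int) (n : nat) (x : E) : Prop :=
  x = 0 \/ ((- (n%:Z) <= oP x) /\
     forall o, is_place_on allE o -> ~ same_place_on allE o oP -> 0 <= o x).

Definition dimK (L : E -> Prop) (n : nat) : Prop :=
  exists b : 'I_n -> E,
    [/\ (forall i, L (b i)),
        (forall c : 'I_n -> K, \sum_i cst (c i) * b i = 0 -> forall i, c i = 0) &
        (forall x, L x -> exists c : 'I_n -> K, x = \sum_i cst (c i) * b i)].

(* genus one (with a rational place P): l(nP) = n for all n >= 1 *)
Definition elliptic : Prop :=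
  exists oP evP, is_rat_place_on allE oP evP /\
    forall n, (1 <= n)%N -> dimK (Lspace oP n) n.

Definition is_Kaut (g : E -> E) : Prop :=
  [/\ (forall x y, g (x + y) = g x + g y),
      (forall x y, g (x * y) = g x * g y),
      bijective g &
      (forall c, g (cst c) = cst c)].

Definition aut_subgroup (G : nat -> E -> E) (n : nat) : Prop :=
  [/\ (forall k, (k < n)%N -> is_Kaut (G k)),
      (forall k l, (k < n)%N -> (l < n)%N -> k <> l -> exists x, G k x <> G l x) &
      (forall k l, (k < n)%N -> (l < n)%N ->
         exists m, (m < n)%N /\ forall x, G k (G l x) = G m x)].

Definition fixed_field (G : nat -> E -> E) (n : nat) (x : E) : Prop :=
  forall k, (k < n)%N -> G k x = x.

Definition rational_generator (F : E -> Prop) (z : E) : Prop :=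
  F z /\ forall x, F x -> exists p q : {poly K},
    (map_poly cst q).[z] != 0 /\ x = (map_poly cst p).[z] / (map_poly cst q).[z].

Definition pole_divisor (o : nat -> E -> int) (vs : seq nat) (x : E) : Prop :=
  [/\ x != 0,
      (forall v, v \in vs -> o v x = -1) &
      (forall o', is_place_on allE o' -> (forall v, v \in vs -> ~ same_place_on allE o' (o v)) ->
         0 <= o' x)].

Definition fa (z : E) (omega : nat -> E) (r t : nat) (a : nat -> nat -> K) : E :=
  \sum_(1 <= j < t.+1) cst (a 0%N j) * z ^+ j.-1
  + \sum_(1 <= i < r) (\sum_(1 <= j < t) cst (a i j) * z ^+ j.-1) * omega i.

(* B_u(a), positions 0..r+1 (position k < r+1 is f_a(P_{u,k+1})) *)
Definition Bvec (evP : nat -> nat -> E -> K) (evQ : nat -> E -> K) (z : E)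
  (omega : nat -> E) (r t u : nat) (a : nat -> nat -> K) : 'I_(r.+2) -> K :=
  fun k => if (k < r.+1)%N then evP u k.+1 (fa z omega r t a)
           else \sum_(1 <= j < t.+1) a 0%N j * (evQ u z) ^+ j.-1.

End FunctionFieldDefs.

Definition Mmat (K : finFieldType) (E : fieldType) (evP : nat -> nat -> E -> K)
  (omega : nat -> E) (r u : nat) : 'M[K]_(r.+1, r) :=
  \matrix_(v < r.+1, i < r) evP u v.+1 (omega i).
Definition Mmat' (K : finFieldType) (E : fieldType) (evP : nat -> nat -> E -> K)
  (omega : nat -> E) (r u : nat) : 'M[K]_(r.+1, r.-1) :=
  \matrix_(v < r.+1, i < r.-1) evP u v.+1 (omega i.+1).
Arguments Bvec [K E] cst evP evQ z omega r t u a _.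

(* Main.v *)
Require Import Defs.
From HB Require Import structures.
From mathcomp Require Import all_boot all_order all_algebra.
From mathcomp Require Import zify ring.
Import Order.TTheory GRing.Theory Num.Theory.
Local Open Scope ring_scope.
Set Implicit Arguments. Unset Strict Implicit.

Section Aux.
Variables (K : finFieldType) (E : fieldType) (cst : {rmorphism K -> E}).

Section Val.
Variables (S : E -> Prop) (o : E -> int).
Hypotheses (S1 : S 1) (Smul : forall x y, S x -> S y -> S (x*y))
  (SV : forall x, S x -> S x^-1).

Lemma ord1 : is_place_on cst S o -> o 1 = 0.
Proof. case=> Hm _ _ _. have := Hm 1 1 S1 S1 (oner_neq0 _) (oner_neq0 _). rewrite mulr1. lia. Qed.

Lemma ordV x : is_place_on cst S o -> S x -> x != 0 -> o x^-1 = - o x.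
Proof. move=> Po Sx nx. have h1 := ord1 Po. case: Po => Hm _ _ _.
have := Hm x x^-1 Sx (SV Sx) nx (invr_neq0 nx). rewrite mulfV // h1. lia. Qed.

Lemma SX x n : S x -> S (x ^+ n).
Proof. by move=> Sx; elim: n => [|n IH]; [rewrite expr0 | rewrite exprS; apply Smul]. Qed.

Lemma ordX x n : is_place_on cst S o -> S x -> x != 0 -> o (x ^+ n) = n%:Z * o x.
Proof. move=> Po Sx nx; elim: n => [|n IH]; first by rewrite expr0 (ord1 Po) mul0r.
case: Po => Hm _ _ _. rewrite exprS Hm //; last by rewrite expf_neq0.
  - by rewrite IH intS mulrDl mul1r.
  - exact: SX. Qed.
End Val.

Lemma zero_transfer S o1 o2 : S 1 -> (forall x y, S x -> S y -> S (x*y)) -> (forall x, S x -> S x^-1) ->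
  is_place_on cst S o1 -> is_place_on cst S o2 ->
  (forall x, S x -> x != 0 -> (0 <= o1 x <-> 0 <= o2 x)) ->
  forall x, S x -> x != 0 -> o1 x = 0 -> o2 x = 0.
Proof.
move=> S1 Smul SV P1 P2 Heq x Sx nx h.
have h1 : 0 <= o2 x by apply/(Heq _ Sx nx); rewrite h.
have h2 : 0 <= o2 x^-1.
  by apply/(Heq _ (SV _ Sx) (invr_neq0 nx)); rewrite (ordV S1 SV P1) // h.
rewrite (ordV S1 SV P2) // in h2. lia.
Qed.

Lemma val_eq S o1 o2 : S 1 -> (forall x y, S x -> S y -> S (x*y)) -> (forall x, S x -> S x^-1) ->
  is_place_on cst S o1 -> is_place_on cst S o2 ->
  (forall x, S x -> x != 0 -> (0 <= o1 x <-> 0 <= o2 x)) -> same_place_on S o1 o2.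
Proof.
move=> S1 Smul SV P1 P2 Heq.
have Heq' : forall x, S x -> x != 0 -> (0 <= o2 x <-> 0 <= o1 x).
  by move=> x Sx nx; split => /(Heq _ Sx nx).
have z21 := zero_transfer S1 Smul SV P2 P1 Heq'.
have z12 := zero_transfer S1 Smul SV P1 P2 Heq.
have [w1 [Sw1 nw1 ow1]] : exists w, [/\ S w, w != 0 & o1 w = 1] by case: P1.
set m := o2 w1.
have m0 : 0 <= m by apply/(Heq _ Sw1 nw1); rewrite ow1.
have m1 : m != 0 by apply/eqP => /(z21 _ Sw1 nw1); rewrite ow1.
have Hm1 := P1; have Hm2 := P2. case: Hm1 => M1 _ _ _. case: Hm2 => M2 _ _ _.
have key : forall x, S x -> x != 0 -> o2 x = m * o1 x.
  move=> x Sx nx.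
  have gen : forall y, S y -> y != 0 -> o1 (x * y) = 0 -> o2 x = - o2 y.
    move=> y Sy ny e. have ny' : x * y != 0 by rewrite mulf_neq0.
    have := z12 _ (Smul _ _ Sx Sy) ny' e. rewrite M2 //. lia.
  have Sw1V := SV _ Sw1. have nw1V : w1^-1 != 0 by rewrite invr_neq0.
  case En: (o1 x) => [k|k].
  - have Sy : S ((w1^-1)^+k) by apply: SX.
    have ny : (w1^-1)^+k != 0 by rewrite expf_neq0.
    have e2 : o2 ((w1^-1)^+k) = k%:Z * - m by rewrite (ordX S1 Smul) // (ordV S1 SV P2).
    rewrite (gen _ Sy ny) ?e2; first by nia.
    rewrite M1 // (ordX S1 Smul) // (ordV S1 SV P1) // En ow1. lia.
  - have Sy : S (w1^+k.+1) by apply: SX.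
    have ny : w1^+k.+1 != 0 by rewrite expf_neq0.
    have e2 : o2 (w1^+k.+1) = k.+1%:Z * m by rewrite (ordX S1 Smul).
    rewrite (gen _ Sy ny) ?e2; first by have -> : Negz k = - (k.+1)%:Z by []; rewrite mulrN mulrC.
    rewrite M1 // (ordX S1 Smul) // En ow1 NegzE. lia.
have [w2 [Sw2 nw2 ow2]] : exists w, [/\ S w, w != 0 & o2 w = 1] by case: P2.
have mE : m = 1.
  have := key _ Sw2 nw2. rewrite ow2. set q := o1 w2 => hq.
  have [q0|q0] := lerP q 0.
    have := mulr_ge0_le0 m0 q0. lia.
  have q1 : 1 <= q by lia.
  have := ler_peMr m0 q1. lia.
move=> x Sx nx. by rewrite key // mE mul1r.
Qed.

Section Fixed.
Variables (G : nat -> E -> E) (n : nat).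
Hypothesis HG : forall k, (k < n)%N -> is_Kaut cst (G k).

Lemma G0 k : (k < n)%N -> G k 0 = 0.
Proof. move=> /HG [Ha _ _ _]. have := Ha 0 0. rewrite addr0 => h.
by have := congr1 (fun x => x - G k 0) h; rewrite subrr addrK. Qed.

Lemma GN k x : (k < n)%N -> G k (- x) = - G k x.
Proof. move=> kn; have [Ha _ _ _] := HG kn. apply/eqP; rewrite -subr_eq0 opprK -Ha addNr.
by rewrite G0. Qed.

Lemma G1 k : (k < n)%N -> G k 1 = 1.
Proof. move=> kn; have [_ _ _ Hc] := HG kn. by rewrite -(rmorph1 cst) Hc. Qed.

Lemma GV k x : (k < n)%N -> G k x^-1 = (G k x)^-1.
Proof. move=> kn; have [_ Hm _ _] := HG kn. have [->|nx] := eqVneq x 0.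
  by rewrite invr0 G0 // invr0.
have e : G k x * G k x^-1 = 1 by rewrite -Hm mulfV // G1.
have ng : G k x != 0 by apply/eqP => h; move: e; rewrite h mul0r => /eqP; rewrite eq_sym oner_eq0.
by apply: (mulfI ng); rewrite e mulfV. Qed.

Let F := fixed_field G n.
Lemma F1 : F 1. Proof. by move=> k kn; rewrite G1. Qed.
Lemma Fmul x y : F x -> F y -> F (x * y).
Proof. move=> fx fy k kn; have [_ Hm _ _] := HG kn. by rewrite Hm fx ?fy. Qed.
Lemma Fadd x y : F x -> F y -> F (x + y).
Proof. move=> fx fy k kn; have [Ha _ _ _] := HG kn. by rewrite Ha fx ?fy. Qed.
Lemma Fopp x : F x -> F (- x).
Proof. move=> fx k kn. by rewrite GN // fx. Qed.
Lemma FV x : F x -> F x^-1.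
Proof. move=> fx k kn. by rewrite GV // fx. Qed.
Lemma Fcst c : F (cst c).
Proof. move=> k kn; have [_ _ _ Hc] := HG kn. by rewrite Hc. Qed.
End Fixed.

Section Eval.
Variables (o : E -> int) (ev : E -> K).
Hypothesis Hr : is_rat_place_on cst (@allE E) o ev.

Lemma regC c : regular o (cst c).
Proof. have [[_ _ Hc _] _ _ _] := Hr. have [->|nc] := eqVneq c 0.
  by left; rewrite rmorph0.
by right; rewrite Hc. Qed.

Lemma reg0 : regular o 0. Proof. by left. Qed.

Lemma regD x y : regular o x -> regular o y -> regular o (x + y).
Proof. have [[_ Ha _ _] _ _ _] := Hr.
case=> [->|hx]; first by rewrite add0r. case=> [->|hy]; first by rewrite addr0; right.
have [->|nx] := eqVneq x 0; first by rewrite add0r; right.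
have [->|ny] := eqVneq y 0; first by rewrite addr0; right.
have [->|nxy] := eqVneq (x + y) 0; first by left.
right. have := Ha x y I I nx ny nxy. move: hx hy. case: (leP (o x) (o y)) => _; lia. Qed.

Lemma regM x y : regular o x -> regular o y -> regular o (x * y).
Proof. have [[Hm _ _ _] _ _ _] := Hr.
case=> [->|hx]; first by rewrite mul0r; left. case=> [->|hy]; first by rewrite mulr0; left.
have [->|nx] := eqVneq x 0; first by rewrite mul0r; left.
have [->|ny] := eqVneq y 0; first by rewrite mulr0; left.
right. rewrite Hm //. lia. Qed.

Lemma evD x y : regular o x -> regular o y -> ev (x + y) = ev x + ev y.
Proof. have [_ _ He _] := Hr. by move=> hx hy; case: (He x y I I hx hy). Qed.
Lemma evM x y : regular o x -> regular o y -> ev (x * y) = ev x * ev y.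
Proof. have [_ _ He _] := Hr. by move=> hx hy; case: (He x y I I hx hy). Qed.
Lemma evC c : ev (cst c) = c. Proof. by have [_ Hc _ _] := Hr. Qed.
Lemma ev0 : ev 0 = 0. Proof. by rewrite -(rmorph0 cst) evC. Qed.
Lemma ev1 : ev 1 = 1. Proof. by rewrite -(rmorph1 cst) evC. Qed.

Lemma regX x n : regular o x -> regular o (x ^+ n).
Proof. move=> hx; elim: n => [|n IH]; first by rewrite expr0 -(rmorph1 cst); apply: regC.
by rewrite exprS; apply: regM. Qed.
Lemma evX x n : regular o x -> ev (x ^+ n) = ev x ^+ n.
Proof. move=> hx; elim: n => [|n IH]; first by rewrite !expr0 ev1.
by rewrite exprS (evM hx (regX _ hx)) IH exprS. Qed.

Lemma ev_sum (s : seq nat) (f : nat -> E) : (forall i, i \in s -> regular o (f i)) ->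
  regular o (\sum_(i <- s) f i) /\ ev (\sum_(i <- s) f i) = \sum_(i <- s) ev (f i).
Proof. elim: s => [|i s IH] H; first by rewrite !big_nil ev0; split => //; left.
have [h1 h2] : regular o (\sum_(j <- s) f j) /\ ev (\sum_(j <- s) f j) = \sum_(j <- s) ev (f j).
  by apply: IH => j js; apply: H; rewrite inE js orbT.
have hi : regular o (f i) by apply: H; rewrite inE eqxx.
by rewrite !big_cons; split; [apply: regD | rewrite evD // h2]. Qed.

Lemma ev_poly (s : seq nat) (c : nat -> K) z : regular o z ->
  regular o (\sum_(j <- s) cst (c j) * z ^+ j.-1) /\
  ev (\sum_(j <- s) cst (c j) * z ^+ j.-1) = \sum_(j <- s) c j * ev z ^+ j.-1.
Proof. move=> hz. have [h1 h2] := @ev_sum s (fun j => cst (c j) * z ^+ j.-1) (fun j _ => regM (regC _) (regX _ hz)).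
split => //; rewrite h2; apply: eq_bigr => j _. by rewrite (evM (regC _) (regX _ hz)) evC (evX _ hz). Qed.

Lemma ev_fa z omega r t a : regular o z -> (forall i, (i < r)%N -> regular o (omega i)) ->
  ev (fa cst z omega r t a) = \sum_(1 <= j < t.+1) a 0%N j * ev z ^+ j.-1
     + \sum_(1 <= i < r) (\sum_(1 <= j < t) a i j * ev z ^+ j.-1) * ev (omega i).
Proof. move=> hz hom. rewrite /fa.
have [p1 p2] := ev_poly (index_iota 1 t.+1) (a 0%N) hz.
have [q1 q2] := @ev_sum (index_iota 1 r) (fun i => (\sum_(1 <= j < t) cst (a i j) * z ^+ j.-1) * omega i)
  (fun i hi => regM (ev_poly _ (a i) hz).1 (hom i ltac:(by move: hi; rewrite mem_index_iota => /andP[]))).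
rewrite evD // p2 q2; congr (_ + _). apply: eq_big_seq => i hi.
have hi' : (i < r)%N by move: hi; rewrite mem_index_iota => /andP[].
by rewrite (evM (ev_poly _ _ hz).1 (hom _ hi')) (ev_poly _ _ hz).2. Qed.
End Eval.
End Aux.

Lemma enum_inj (T : finType) (A : {set T}) n (H : #|A| = n) :
  exists e : 'I_n -> T, injective e /\ forall j, e j \in A.
Proof.
exists (fun j => enum_val (cast_ord (esym H) j)); split.
  by move=> j1 j2 /enum_val_inj /cast_ord_inj.
by move=> j; apply: enum_valP.
Qed.

Lemma kill (K : fieldType) n (A : 'M[K]_n) (v : 'cV[K]_n) :
  \det A != 0 -> A *m v = 0 -> v = 0.
Proof. move=> hd hv. have hu : A \in unitmx by rewrite unitmxE unitfE.
by rewrite -(mulKmx hu v) hv mulmx0. Qed.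

Lemma linalg (K : fieldType) r (m : nat -> nat -> K) (D : nat -> K) (S : {set 'I_r.+2}) :
  (2 <= r)%N ->
  (forall f : 'I_r -> 'I_r.+1, injective f -> \det (rowsub f (\matrix_(v < r.+1, i < r) m v i)) != 0) ->
  (forall f : 'I_r.-1 -> 'I_r.+1, injective f -> \det (rowsub f (\matrix_(v < r.+1, i < r.-1) m v i.+1)) != 0) ->
  #|S| = r ->
  (forall k : 'I_r.+2, k \in S -> (k < r.+1)%N -> \sum_(i < r) m k i * D i = 0) ->
  (ord_max \in S -> D 0%N = 0) ->
  forall i, (i < r)%N -> D i = 0.
Proof.
case: r S => [|[|r]] // S _ HM HM' cS HS Hmax.
have [inS|notin] := boolP (ord_max \in S).
- have D0 := Hmax inS.
  have cS' : #|S :\ ord_max| = r.+1 by move: cS; rewrite (cardsD1 ord_max) inS add1n => -[].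
  have [e [ei eS]] := enum_inj cS'.
  have elt j : (e j < r.+3)%N.
    have := eS j; rewrite !inE => /andP[ne _]. have := ltn_ord (e j).
    rewrite ltnS leq_eqVlt => /orP[/eqP h|//]. by move: ne; rewrite -val_eqE /= h eqxx.
  pose f := fun j => (inord (e j) : 'I_r.+3).
  have fi : injective f.
    move=> j1 j2 /(congr1 val); rewrite /f /= !inordK // => h. by apply: ei; apply: val_inj.
  set v := \col_(i < r.+1) D i.+1.
  have : v = 0.
    apply: (kill (HM' f fi)). apply/matrixP => j l. rewrite !mxE.
    have ej : e j \in S by have := eS j; rewrite !inE => /andP[].
    transitivity (\sum_(i < r.+2) m (e j) i * D i); last exact: HS _ ej (elt j).
    have D0' : D (@ord0 r.+1) = 0 := D0.
    rewrite [RHS]big_ord_recl D0' mulr0 add0r.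
    apply: eq_bigr => i _. rewrite !mxE /f inordK //.
  move=> v0 [|i] ilt; first exact: D0. have := congr1 (fun M : 'cV[K]_r.+1 => M (@Ordinal r.+1 i ilt) 0) v0. by rewrite !mxE.
- have cS' := cS. have [e [ei eS]] := enum_inj cS'.
  have elt j : (e j < r.+3)%N.
    have ne : e j != ord_max by apply: contraNneq notin => <-.
    have := ltn_ord (e j).
    rewrite ltnS leq_eqVlt => /orP[/eqP h|//]. by move: ne; rewrite -val_eqE /= h eqxx.
  pose f := fun j => (inord (e j) : 'I_r.+3).
  have fi : injective f.
    move=> j1 j2 /(congr1 val); rewrite /f /= !inordK // => h. by apply: ei; apply: val_inj.
  set v := \col_(i < r.+2) D i.
  have : v = 0.
    apply: (kill (HM f fi)). apply/matrixP => j l. rewrite !mxE.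
    transitivity (\sum_(i < r.+2) m (e j) i * D i); last exact: HS _ (eS j) (elt j).
    apply: eq_bigr => i _. rewrite !mxE /f inordK //.
  move=> v0 i ilt. have := congr1 (fun M : 'cV[K]_r.+2 => M (Ordinal ilt) 0) v0. by rewrite !mxE.
Qed.

Unset Implicit Arguments.

Theorem mainTheorem8 (K : finFieldType) (E : fieldType) (cst : {rmorphism K -> E})
  (r s t : nat) (G : nat -> E -> E)
  (ordQ : nat -> E -> int) (evQ : nat -> E -> K)
  (ordP : nat -> nat -> E -> int) (evP : nat -> nat -> E -> K)
  (z : E) (omega : nat -> E) (u : nat) :
  (2 <= r)%N ->
  full_constant_field cst ->
  elliptic cst ->
  aut_subgroup cst G r.+1 ->
  rational_generator cst (fixed_field G r.+1) z ->
  (forall u', (u' <= s)%N -> is_rat_place_on cst (fixed_field G r.+1) (ordQ u') (evQ u')) ->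
  (forall u1 u2, (u1 <= s)%N -> (u2 <= s)%N -> u1 <> u2 ->
     ~ same_place_on (fixed_field G r.+1) (ordQ u1) (ordQ u2)) ->
  (forall u' v, (u' <= s)%N -> (1 <= v <= r.+1)%N ->
     is_rat_place_on cst (@allE E) (ordP u' v) (evP u' v) /\
     lies_over (fixed_field G r.+1) (ordP u' v) (ordQ u')) ->
  (forall u' v1 v2, (u' <= s)%N -> (1 <= v1 <= r.+1)%N -> (1 <= v2 <= r.+1)%N ->
     v1 <> v2 -> ~ same_place_on (@allE E) (ordP u' v1) (ordP u' v2)) ->
  (forall u' o, (u' <= s)%N -> is_place_on cst (@allE E) o ->
     lies_over (fixed_field G r.+1) o (ordQ u') ->
     exists2 v, (1 <= v <= r.+1)%N & same_place_on (@allE E) o (ordP u' v)) ->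
  pole_divisor cst (ordP 0%N) (iota 1 r.+1) z ->
  omega 0%N = 1 ->
  (forall i, (1 <= i <= r.-1)%N -> pole_divisor cst (ordP 0%N) (iota 1 i.+1) (omega i)) ->
  (forall c : nat -> E, (forall i, (i < r)%N -> fixed_field G r.+1 (c i)) ->
     \sum_(i < r) c i * omega i = 0 -> forall i, (i < r)%N -> c i = 0) ->
  (1 <= t <= s)%N ->
  (1 <= u <= s)%N ->
  (forall f : 'I_r -> 'I_r.+1, injective f -> \det (rowsub f (Mmat evP omega r u)) != 0) ->
  (forall f : 'I_r.-1 -> 'I_r.+1, injective f -> \det (rowsub f (Mmat' evP omega r u)) != 0) ->
  forall (a b : nat -> nat -> K) (S : {set 'I_r.+2}),
    #|S| = r ->
    (forall k, k \in S -> Bvec cst evP evQ z omega r t u a k = Bvec cst evP evQ z omega r t u b k) ->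
    forall k, Bvec cst evP evQ z omega r t u a k = Bvec cst evP evQ z omega r t u b k.
Proof.
move=> r2 _ _ Gsub zgen HQ Qdist HP Pdist _ zpole om0 ompole _ tr ur Mdet M'det a b S cardS HS.
have HG : forall k, (k < r.+1)%N -> is_Kaut cst (G k) by case: Gsub.
set F := fixed_field G r.+1.
have F1' : F 1 := F1 HG.
have Fmul' := Fmul HG. have FV' := FV HG.
have zF : F z by case: zgen.
have u0 : u <> 0%N by move=> e; move: ur; rewrite e.
have us : (u <= s)%N by case/andP: ur.
have Prat v : (1 <= v <= r.+1)%N -> is_rat_place_on cst (@allE E) (ordP u v) (evP u v).
  by move=> hv; case: (HP u v us hv) => ? ?.
have Plies v : (1 <= v <= r.+1)%N -> lies_over F (ordP u v) (ordQ u).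
  by move=> hv; case: (HP u v us hv) => ? ?.
have Pplace v : (1 <= v <= r.+1)%N -> is_place_on cst (@allE E) (ordP u v).
  by move=> hv; case: (Prat v hv) => ?.
have notsame v w : (1 <= v <= r.+1)%N -> (1 <= w <= r.+1)%N ->
    ~ same_place_on (@allE E) (ordP u v) (ordP 0%N w).
  move=> hv hw hs. apply: (Qdist u 0%N us (leq0n s) u0).
  apply: (val_eq (cst:=cst) F1' Fmul' FV'); [by case: (HQ u us) => ? | by case: (HQ 0%N (leq0n s)) => ? |].
  have l0 : lies_over F (ordP 0%N w) (ordQ 0%N) by case: (HP 0%N w (leq0n s) hw).
  move=> x Fx nx; split => h.
    by apply/(l0 x Fx nx); rewrite -(hs x I nx); apply/(Plies v hv x Fx nx).
  by apply/(Plies v hv x Fx nx); rewrite (hs x I nx); apply/(l0 x Fx nx).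
have iota_r w n : w \in iota 1 n -> (1 <= w <= n)%N.
  by rewrite mem_iota => /andP[h1 h2]; apply/andP; split; lia.
have regz v : (1 <= v <= r.+1)%N -> regular (ordP u v) z.
  move=> hv; right. case: zpole => _ _ H3. apply: H3 (Pplace v hv) _ => w /iota_r hw.
  exact: notsame.
have regom v i : (1 <= v <= r.+1)%N -> (i < r)%N -> regular (ordP u v) (omega i).
  move=> hv ir; case: i ir => [|i] ir.
    by right; rewrite om0 (ord1 (S:=(@allE E)) I (Pplace v hv)).
  right. have hi : (1 <= i.+1 <= r.-1)%N by apply/andP; split; lia.
  case: (ompole _ hi) => _ _ H3. apply: H3 (Pplace v hv) _ => w /iota_r hw.
  apply: notsame => //. apply/andP; split; lia.
have evz v : (1 <= v <= r.+1)%N -> evP u v z = evQ u z.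
  move=> hv. set c := evP u v z.
  have [QP Qev QD Qz] := HQ u us.
  have [PP Pev PD Pz] := Prat v hv.
  have Fc : F (cst (- c)) := Fcst HG _.
  have Fx : F (z + cst (- c)) := Fadd HG zF Fc.
  have regCQ : regular (ordQ u) (cst (- c)).
    have [->|nc] := eqVneq (- c) 0; first by left; rewrite rmorph0.
    by case: QP => _ _ Hc _; right; rewrite Hc.
  have [z0|nz] := eqVneq z 0.
    rewrite /c z0 -(rmorph0 cst) Qev. by case: (Prat v hv).
  have regzQ : regular (ordQ u) z.
    right; apply/(Plies v hv z zF nz). by case: (regz v hv) => // /eqP; rewrite (negbTE nz).
  have hx : evP u v (z + cst (- c)) = 0.
    by rewrite (evD (Prat v hv) (regz v hv) (regC (Prat v hv) _)) (evC (Prat v hv)) -/c addrN.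
  have [x0|nx] := eqVneq (z + cst (- c)) 0.
    have zc : z = cst c by move/eqP: x0; rewrite rmorphN addr_eq0 opprK => /eqP.
    by rewrite [in RHS]zc Qev.
  have regx : regular (ordP u v) (z + cst (- c)) := regD (Prat v hv) (regz v hv) (regC (Prat v hv) _).
  have px : (0 < ordP u v (z + cst (- c)))%R.
    by case: ((Pz _ I regx).1 hx) => // /eqP; rewrite (negbTE nx).
  have qx0 : (0 <= ordQ u (z + cst (- c)))%R.
    by apply/(Plies v hv _ Fx nx); lia.
  have qx : (0 < ordQ u (z + cst (- c)))%R.
    rewrite lt0r qx0 andbT; apply/eqP => q0.
    have nxV : (z + cst (- c))^-1 != 0 by rewrite invr_neq0.
    have h1 : (0 <= ordQ u (z + cst (- c))^-1)%R by rewrite (ordV F1' FV' QP) // q0.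
    have := (Plies v hv _ (FV' _ Fx) nxV).2 h1.
    rewrite (ordV (S:=(@allE E)) I (fun _ _ => I) PP) //. lia.
  have := (Qz _ Fx (or_intror qx0)).2 (or_intror qx).
  rewrite (QD _ _ zF Fc regzQ regCQ).1 Qev => /eqP. rewrite addr_eq0 opprK => /eqP ->. done.
pose X (a : nat -> nat -> K) := \sum_(1 <= j < t.+1) a 0%N j * evQ u z ^+ j.-1.
pose Y (a : nat -> nat -> K) i := \sum_(1 <= j < t) a i j * evQ u z ^+ j.-1.
pose m k i := evP u k.+1 (omega i).
have Bf : forall (a : nat -> nat -> K) (k : 'I_r.+2), (k < r.+1)%N ->
    Bvec cst evP evQ z omega r t u a k = X a + \sum_(1 <= i < r) Y a i * m k i.
  move=> a' k hk. have hv : (1 <= k.+1 <= r.+1)%N by [].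
  rewrite /Bvec hk (ev_fa (Prat _ hv) t a' (regz _ hv) (fun i => regom _ i hv)) evz //.
have Bl : forall (a : nat -> nat -> K) (k : 'I_r.+2), (k < r.+1)%N = false ->
    Bvec cst evP evQ z omega r t u a k = X a.
  by move=> a' k hk; rewrite /Bvec hk.
pose D i := if i == 0%N then X a - X b else Y a i - Y b i.
have Dz : forall i, (i < r)%N -> D i = 0.
  apply: (linalg (m := m) r2 Mdet M'det cardS).
  - move=> k kS hk. have := HS k kS. rewrite (Bf a k hk) (Bf b k hk) => E0.
    rewrite -(big_mkord xpredT (fun i => m k i * D i)) (big_ltn (ltnW r2)).
    have m0 : m k 0%N = 1 by rewrite /m om0 (ev1 (Prat _ (_ : (1 <= k.+1 <= r.+1)%N))).
    rewrite m0 mul1r /D eqxx.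
    rewrite (eq_big_nat _ _ (F2 := fun i => Y a i * m k i - Y b i * m k i)); last first.
      by move=> i /andP[i1 _]; rewrite ifN ?mulrBr ?[m k i * _]mulrC //; case: i i1.
    rewrite sumrB.
    transitivity (X a + \sum_(1 <= i < r) Y a i * m k i - (X b + \sum_(1 <= i < r) Y b i * m k i)).
      ring.
    by rewrite E0 subrr.
  - move=> hm. have := HS _ hm. rewrite !Bl /D; last by rewrite /= ltnn.
      by move=> ->; rewrite subrr.
    by rewrite /= ltnn.
have XE : X a = X b.
  by have := Dz 0%N (ltnW r2); rewrite /D eqxx => /eqP; rewrite subr_eq0 => /eqP.
move=> k. case hk: (k < r.+1)%N; last by rewrite !Bl.
rewrite !Bf // XE; congr (_ + _). apply: eq_big_nat => i /andP[i1 ir].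
have := Dz i ir; rewrite /D ifN; last by case: i i1 {ir}.
by move/eqP; rewrite subr_eq0 => /eqP ->.
Qed.
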